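(* For every $\mathrm{Sym}$-invariant lattice $L\subseteq\mathbb{Z}^{(\mathbb{N})}$, the monoid $M=L\cap\mathbb{Z}_{\ge0}^{(\mathbb{N})}$ has a finite equivariant Hilbert basis.
   Context: $\mathbb{N}=\{1,2,\dots\}$. $\mathbb{Z}^{(\mathbb{N})}$ is the group of finitely supported integer sequences (standard basis $\mathbf{e}_i$), $\mathbb{Z}_{\ge0}^{(\mathbb{N})}$ its nonnegative elements; a lattice is a subgroup. $\mathrm{Sym}$ is the group of permutations of $\mathbb{N}$ fixing all but finitely many points, acting by $\sigma(\mathbf{e}_i)=\mathbf{e}_{\sigma(i)}$. A Hilbert basis of a monoid is a minimal generating set w.r.t. $\mathbb{Z}_{\ge0}$-linear combinations; $\mathcal{H}\subseteq M$ is an equivariant Hilbert basis if $\mathrm{Sym}(\mathcal{H})=\{\sigma(\mathbf{h})\}$ is a Hilbert basis of $M$. *)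

(* Defs.v *)
From Stdlib Require Import ZArith List.
Import ListNotations.
Open Scope Z_scope.

(* Integer sequences indexed by nat (index i stands for i+1 in the paper). *)
Definition vec := nat -> Z.

Definition finsupp (v : vec) : Prop :=
  exists n : nat, forall i : nat, (n <= i)%nat -> v i = 0.

Definition vzero : vec := fun _ => 0.
Definition vadd (u v : vec) : vec := fun i => u i + v i.
Definition vopp (v : vec) : vec := fun i => - v i.

Definition is_lattice (L : vec -> Prop) : Prop :=
  (forall v, L v -> finsupp v) /\ L vzero /\
  (forall u v, L u -> L v -> L (vadd u v)) /\
  (forall v, L v -> L (vopp v)).

Record finperm := FinPerm {
  pf : nat -> nat;
  pf_inv : nat -> nat;
  pf_invK : forall i, pf_inv (pf i) = i;
  pf_K : forall i, pf (pf_inv i) = i;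
  pf_fin : exists n : nat, forall i : nat, (n <= i)%nat -> pf i = i
}.

(* Action sigma(e_i) = e_{sigma i}, i.e. (sigma v)_i = v_{sigma^{-1} i}. *)
Definition act (s : finperm) (v : vec) : vec := fun i => v (pf_inv s i).

Definition sym_invariant (L : vec -> Prop) : Prop :=
  forall (s : finperm) (v : vec), L v -> L (act s v).

Definition nonneg (v : vec) : Prop := forall i, 0 <= v i.

Definition nonneg_part (L : vec -> Prop) : vec -> Prop :=
  fun v => L v /\ nonneg v.

Definition nncomb (B : vec -> Prop) (v : vec) : Prop :=
  exists cs : list (nat * vec),
    Forall (fun p => B (snd p)) cs /\
    forall i, v i = fold_right (fun p acc => Z.of_nat (fst p) * snd p i + acc) 0 cs.

Definition generates (B M : vec -> Prop) : Prop :=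
  (forall v, B v -> M v) /\ (forall v, M v -> nncomb B v).

Definition hilbert_basis (B M : vec -> Prop) : Prop :=
  generates B M /\
  forall B' : vec -> Prop,
    (forall v, B' v -> B v) -> generates B' M -> forall v, B v -> B' v.

Definition orbit (H : list vec) : vec -> Prop :=
  fun v => exists (s : finperm) (h : vec), In h H /\ v = act s h.

Definition equivariant_hilbert_basis (H : list vec) (M : vec -> Prop) : Prop :=
  (forall h, In h H -> M h) /\ hilbert_basis (orbit H) M.

(* Main.v *)
Require Import Defs.
From Stdlib Require Import ZArith List Arith Lia Wf_nat Permutation FinFun.
From Stdlib Require Import Classical FunctionalExtensionality.
Import ListNotations.
Open Scope Z_scope.

Definition bounded (v : vec) (n : nat) : Prop := forall i, (n <= i)%nat -> v i = 0.
Fixpoint vsum (n : nat) (f : nat -> Z) : Z :=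
  match n with O => 0 | S m => vsum m f + f m end.
Definition hassum (v : vec) (s : Z) : Prop := exists n, bounded v n /\ vsum n v = s.
Definition ind (i : nat) (c : Z) : vec := fun m => if Nat.eqb m i then c else 0.
Definition dd (c : Z) (i j : nat) : vec := fun m => ind i c m - ind j c m.

Ltac noif t := match t with context [Nat.eqb _ _] => fail 1 | _ => idtac end.
Ltac eqb_cases := repeat (match goal with |- context [Nat.eqb ?x ?y] => noif x; noif y; destruct (Nat.eqb_spec x y) end; cbn beta iota); try lia.

Lemma vsum_ext n f g : (forall m, (m < n)%nat -> f m = g m) -> vsum n f = vsum n g.
Proof. induction n; simpl; intros H; auto. rewrite IHn by (intros; apply H; lia). rewrite H by lia. reflexivity. Qed.

Lemma vsum_add n f g : vsum n (fun m => f m + g m) = vsum n f + vsum n g.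
Proof. induction n; simpl; lia. Qed.
Lemma vsum_sub n f g : vsum n (fun m => f m - g m) = vsum n f - vsum n g.
Proof. induction n; simpl; lia. Qed.
Lemma vsum_zero n f : (forall m, (m < n)%nat -> f m = 0) -> vsum n f = 0.
Proof. induction n; simpl; intros H; auto. rewrite IHn by (intros; apply H; lia). rewrite H by lia. lia. Qed.
Lemma vsum_extend_k v n k : bounded v n -> vsum (n + k) v = vsum n v.
Proof. intros H. induction k; simpl. now rewrite Nat.add_0_r.
  rewrite Nat.add_succ_r. simpl. rewrite IHk, H by lia. lia. Qed.
Lemma vsum_extend v n n' : bounded v n -> (n <= n')%nat -> vsum n' v = vsum n v.
Proof. intros H Hle. replace n' with (n + (n' - n))%nat by lia. apply vsum_extend_k; auto. Qed.
Lemma vsum_nonneg n f : (forall m, 0 <= f m) -> 0 <= vsum n f.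
Proof. intros H; induction n; simpl; auto; try lia. specialize (H n); lia. Qed.
Lemma vsum_mono f n n' : (forall m, 0 <= f m) -> (n <= n')%nat -> vsum n f <= vsum n' f.
Proof. intros H Hle. induction Hle; simpl; try lia. specialize (H m); lia. Qed.
Lemma vsum_ge_entry f n m : (forall m, 0 <= f m) -> (m < n)%nat -> f m <= vsum n f.
Proof. intros H Hlt. pose proof (vsum_mono f (S m) n H Hlt). simpl in H0.
  pose proof (vsum_nonneg m f H). lia. Qed.
Lemma vsum_zero_inv f n : (forall m, 0 <= f m) -> vsum n f = 0 -> forall m, (m < n)%nat -> f m = 0.
Proof. intros H Hs m Hm. pose proof (vsum_ge_entry f n m H Hm). specialize (H m). lia. Qed.
Lemma vsum_ind n i c : (i < n)%nat -> vsum n (ind i c) = c.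
Proof. induction n; intros Hi; [lia|]. simpl. destruct (Nat.eq_dec i n).
  - subst. rewrite vsum_zero. unfold ind. rewrite Nat.eqb_refl. lia.
    intros m Hm. unfold ind. destruct (Nat.eqb_spec m n); lia.
  - rewrite IHn by lia. unfold ind. destruct (Nat.eqb_spec n i); lia. Qed.
Lemma vsum_dd n i j c : (i < n)%nat -> (j < n)%nat -> vsum n (dd c i j) = 0.
Proof. intros. unfold dd. rewrite vsum_sub, !vsum_ind; lia. Qed.
Lemma vsum_count f K : (forall j, (j < K)%nat -> 1 <= f j) -> Z.of_nat K <= vsum K f.
Proof. induction K; simpl; intros H; try lia. assert (Z.of_nat K <= vsum K f) by (apply IHK; intros; apply H; lia).
  specialize (H K ltac:(lia)). lia. Qed.

Lemma fold_add_acc l a : fold_right Z.add a l = fold_right Z.add 0 l + a.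
Proof. induction l; simpl; lia. Qed.
Lemma vsum_list n f : vsum n f = fold_right Z.add 0 (map f (seq 0 n)).
Proof. induction n; [reflexivity|]. cbn [vsum]. rewrite IHn, seq_S, map_app, fold_right_app. simpl.
  rewrite (fold_add_acc _ (f n + 0)). lia. Qed.
Lemma perm_fold l l' : Permutation l l' -> fold_right Z.add 0 l = fold_right Z.add 0 l'.
Proof. induction 1; simpl; lia. Qed.

Lemma perm_sum (s : finperm) N n (v : vec) : (forall i, (N <= i)%nat -> pf s i = i) -> (N <= n)%nat ->
  vsum n (fun i => v (pf_inv s i)) = vsum n v.
Proof.
  intros HN Hn. rewrite !vsum_list. rewrite <- (map_map (pf_inv s) v).
  apply perm_fold. apply Permutation_map. apply Permutation_map_same_l.
  - apply Injective_map_NoDup. intros x y Hxy. rewrite <- (pf_K s x), <- (pf_K s y), Hxy. auto.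
    apply seq_NoDup.
  - intros x Hx. apply in_map_iff in Hx. destruct Hx as [i [Hi Hin]]. apply in_seq in Hin. apply in_seq.
    subst x. split; [lia|]. destruct (Nat.lt_ge_cases (pf_inv s i) n); auto.
    exfalso. assert (pf s (pf_inv s i) = pf_inv s i) by (apply HN; lia). rewrite pf_K in H0. lia.
Qed.

Definition swapf (a b : nat) (m : nat) : nat := if Nat.eqb m a then b else if Nat.eqb m b then a else m.
Lemma swapf_inv a b m : swapf a b (swapf a b m) = m.
Proof. unfold swapf. eqb_cases. Qed.
Lemma swapf_fin a b : exists n : nat, forall i : nat, (n <= i)%nat -> swapf a b i = i.
Proof. exists (S (a + b)). intros. unfold swapf. eqb_cases. Qed.
Definition swap a b : finperm := FinPerm (swapf a b) (swapf a b) (swapf_inv a b) (swapf_inv a b) (swapf_fin a b).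

Lemma inv_fin (s : finperm) : exists n : nat, forall i : nat, (n <= i)%nat -> pf_inv s i = i.
Proof. destruct (pf_fin s) as [n Hn]. exists n. intros i Hi. rewrite <- (Hn i Hi) at 1. apply pf_invK. Qed.
Definition pinv (s : finperm) : finperm := FinPerm (pf_inv s) (pf s) (pf_K s) (pf_invK s) (inv_fin s).

Lemma comp_invK (t s : finperm) i : pf_inv s (pf_inv t (pf t (pf s i))) = i.
Proof. now rewrite !pf_invK. Qed.
Lemma comp_K (t s : finperm) i : pf t (pf s (pf_inv s (pf_inv t i))) = i.
Proof. now rewrite !pf_K. Qed.
Lemma comp_fin (t s : finperm) : exists n : nat, forall i : nat, (n <= i)%nat -> pf t (pf s i) = i.
Proof. destruct (pf_fin s) as [n Hn], (pf_fin t) as [k Hk]. exists (n + k)%nat. intros.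
  rewrite Hn, Hk by lia. auto. Qed.
Definition pcomp (t s : finperm) : finperm :=
  FinPerm (fun i => pf t (pf s i)) (fun i => pf_inv s (pf_inv t i)) (comp_invK t s) (comp_K t s) (comp_fin t s).

Lemma act_comp t s v : act t (act s v) = act (pcomp t s) v.
Proof. reflexivity. Qed.
Lemma act_inv s v : act (pinv s) (act s v) = v.
Proof. apply functional_extensionality. intros i. unfold act. simpl. now rewrite pf_invK. Qed.
Lemma act_swap2 a b v : act (swap a b) (act (swap a b) v) = v.
Proof. apply functional_extensionality. intros i. unfold act. simpl. now rewrite swapf_inv. Qed.

Lemma hassum_unique v s s' : hassum v s -> hassum v s' -> s = s'.
Proof. intros [n [Hn Hs]] [n' [Hn' Hs']]. subst.
  rewrite <- (vsum_extend v n (n + n')), <- (vsum_extend v n' (n + n')); auto; lia. Qed.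

Lemma inv_fix (s : finperm) N : (forall i, (N <= i)%nat -> pf s i = i) -> forall i, (N <= i)%nat -> pf_inv s i = i.
Proof. intros HN i Hi. rewrite <- (HN i Hi) at 1. apply pf_invK. Qed.

Lemma hassum_act s v c : hassum v c -> hassum (act s v) c.
Proof. intros [n [Hn Hs]]. destruct (pf_fin s) as [N HN]. exists (n + N)%nat. split.
  - intros i Hi. unfold act. rewrite (inv_fix s N HN i) by lia. apply Hn; lia.
  - unfold act. rewrite perm_sum with (N := N) by (auto; lia). rewrite vsum_extend with (n := n); auto; lia.
Qed.

Definition II (L : vec -> Prop) (c : Z) : Prop := forall i j, i <> j -> L (dd c i j).

Lemma L_ext (L : vec -> Prop) u v : L u -> (forall i, u i = v i) -> L v.
Proof. intros H E. replace v with u; auto. apply functional_extensionality; auto. Qed.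


Lemma II_zero L : is_lattice L -> II L 0.
Proof. intros (_ & H0 & _) i j _. eapply L_ext; [exact H0|]. intros m. unfold dd, ind, vzero. eqb_cases. Qed.
Lemma II_add L c d : is_lattice L -> II L c -> II L d -> II L (c + d).
Proof. intros (_ & _ & Ha & _) Hc Hd i j Hij. eapply L_ext; [apply Ha; [apply (Hc i j Hij)|apply (Hd i j Hij)]|].
  intros m. unfold vadd, dd, ind. eqb_cases. Qed.
Lemma II_opp L c : is_lattice L -> II L c -> II L (- c).
Proof. intros (_ & _ & _ & Ho) Hc i j Hij. eapply L_ext; [apply Ho; apply (Hc i j Hij)|].
  intros m. unfold vopp, dd, ind. eqb_cases. Qed.
Lemma II_sub L c d : is_lattice L -> II L c -> II L d -> II L (c - d).
Proof. intros. apply II_add; auto. apply II_opp; auto. Qed.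
Lemma II_vsum L n f : is_lattice L -> (forall m, II L (f m)) -> II L (vsum n f).
Proof. intros HL H. induction n; simpl. apply II_zero; auto. apply II_add; auto. Qed.
Lemma II_dd L c i j m : is_lattice L -> II L c -> II L (dd c i j m).
Proof. intros HL Hc. unfold dd, ind. destruct (Nat.eqb m i), (Nat.eqb m j).
  - replace (c - c) with 0 by lia. apply II_zero; auto.
  - replace (c - 0) with c by lia. auto.
  - replace (0 - c) with (- c) by lia. apply II_opp; auto.
  - apply II_zero; auto. Qed.

Lemma act_swap_dd a b k c : k <> a -> k <> b -> forall m, act (swap a b) (dd c a k) m = dd c b k m.
Proof. intros. unfold act, dd, ind. cbn. unfold swapf. eqb_cases. Qed.

Lemma K1 L v i : is_lattice L -> sym_invariant L -> L v -> II L (v i).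
Proof.
  intros HL HS Hv. pose proof HL as (Hf & H0 & Ha & Ho).
  destruct (Hf v Hv) as [n Hn]. intros p q Hpq.
  set (k := (n + i + p + q + 1)%nat).
  assert (Hvk : v k = 0) by (apply Hn; unfold k; lia).
  assert (Hk : k <> i /\ k <> p /\ k <> q) by (unfold k; lia).
  clearbody k.
  assert (Hx : L (dd (v i) i k)).
  { eapply L_ext. apply Ha; [exact Hv| apply Ho; apply (HS (swap i k)); exact Hv].
    intros m. unfold vadd, vopp, act, dd, ind. cbn. unfold swapf.
    destruct (Nat.eqb_spec m i); destruct (Nat.eqb_spec m k); try lia; subst.
    - rewrite Hvk. lia.
    - rewrite Hvk. lia. }
  assert (Hy1 : L (dd (v i) p k)) by (eapply L_ext; [apply (HS (swap i p)); exact Hx| apply act_swap_dd; lia]).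
  assert (Hy2 : L (dd (v i) q k)) by (eapply L_ext; [apply (HS (swap i q)); exact Hx| apply act_swap_dd; lia]).
  eapply L_ext. apply Ha; [exact Hy1| apply Ho; exact Hy2].
  intros m. unfold vadd, vopp, dd, ind. eqb_cases.
Qed.

Lemma K2 L n : is_lattice L -> forall u, bounded u n -> (forall m, II L (u m)) -> vsum n u = 0 -> L u.
Proof.
  intros HL. pose proof HL as (Hf & H0 & Ha & Ho).
  induction n as [|m IH]; intros u Hb HI Hs.
  - eapply L_ext; [exact H0|]. intros i. unfold vzero. rewrite Hb; auto. lia.
  - destruct (Nat.eq_dec m 0) as [->|Hm].
    + simpl in Hs. eapply L_ext; [exact H0|]. intros i. unfold vzero. destruct i. lia. rewrite Hb; auto. lia.
    + set (u' := fun x => u x - dd (u m) m 0 x).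
      assert (Lu' : L u').
      { apply IH.
        - intros x Hx. unfold u', dd, ind. destruct (Nat.eqb_spec x m).
          + subst. destruct (Nat.eqb_spec m 0); lia.
          + rewrite Hb by lia. destruct (Nat.eqb_spec x 0); lia.
        - intros x. unfold u'. apply II_sub; auto. apply II_dd; auto.
        - assert (vsum (S m) u' = 0).
          { unfold u'. rewrite vsum_sub, Hs, vsum_dd; lia. }
          simpl in H. unfold u' at 2 in H. unfold dd, ind in H. rewrite Nat.eqb_refl in H.
          destruct (Nat.eqb_spec m 0); lia. }
      eapply L_ext. apply Ha; [exact Lu'| apply (HI m); exact Hm].
      intros x. unfold vadd, u'. lia.
Qed.

Lemma greedy L n : is_lattice L -> forall v t, bounded v n -> nonneg v -> (forall m, II L (v m)) -> II L t ->
  0 <= t <= vsum n v ->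
  exists w, bounded w n /\ (forall m, 0 <= w m <= v m) /\ (forall m, II L (w m)) /\ vsum n w = t.
Proof.
  intros HL. induction n as [|m IH]; intros v t Hb Hnn HI Ht Hle.
  - simpl in Hle. exists vzero. unfold vzero. repeat split; try lia. apply Hnn. intros; apply II_zero; auto. simpl; lia.
  - set (v' := fun x => if Nat.eqb x m then 0 else v x).
    assert (Hs' : vsum m v' = vsum m v).
    { apply vsum_ext. intros x Hx. unfold v'. destruct (Nat.eqb_spec x m); lia. }
    simpl in Hle.
    destruct (Z_le_gt_dec t (vsum m v)).
    + destruct (IH v' t) as [w (Hwb & Hw1 & Hw2 & Hw3)].
      * intros x Hx. unfold v'. destruct (Nat.eqb_spec x m); auto. apply Hb; lia.
      * intros x. unfold v'. destruct (Nat.eqb x m). lia. apply Hnn.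
      * intros x. unfold v'. destruct (Nat.eqb x m). apply II_zero; auto. auto.
      * auto.
      * lia.
      * exists w. split; [intros x Hx; apply Hwb; lia|]. split.
        { intros x. specialize (Hw1 x). unfold v' in Hw1. destruct (Nat.eqb x m). specialize (Hnn x); lia. lia. }
        split; auto. simpl. rewrite Hw3, Hwb; lia.
    + exists (fun x => if Nat.eqb x m then t - vsum m v else v x). split; [|split; [|split]].
      * intros x Hx. destruct (Nat.eqb_spec x m). lia. apply Hb; lia.
      * intros x. destruct (Nat.eqb_spec x m). subst; lia. split; [apply Hnn|lia].
      * intros x. destruct (Nat.eqb x m). apply II_sub; auto. apply II_vsum; auto. auto.
      * simpl. rewrite Nat.eqb_refl. rewrite (vsum_ext m _ v). lia.
        intros x Hx. destruct (Nat.eqb_spec x m); lia.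
Qed.

Definition vals (b : Z) : list Z := map Z.of_nat (seq 0 (S (Z.to_nat b))).
Fixpoint Flist (b : Z) (n : nat) : list vec :=
  match n with
  | O => [vzero]
  | S m => flat_map (fun v => map (fun c => fun x => if Nat.eqb x m then c else v x) (vals b)) (Flist b m)
  end.

Lemma Flist_in b n : forall v, bounded v n -> (forall m, 0 <= v m <= b) -> In v (Flist b n).
Proof.
  induction n as [|m IH]; intros v Hb Hr; cbn [Flist].
  - simpl. left. apply functional_extensionality. intros x. unfold vzero. rewrite Hb; auto; lia.
  - apply in_flat_map. exists (fun x => if Nat.eqb x m then 0 else v x). split.
    + apply IH. intros x Hx. destruct (Nat.eqb_spec x m); auto. apply Hb; lia.
      intros x. destruct (Nat.eqb x m). specialize (Hr m); lia. auto.
    + apply in_map_iff. exists (v m). split.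
      * apply functional_extensionality. intros x. destruct (Nat.eqb_spec x m); subst; auto.
      * unfold vals. apply in_map_iff. exists (Z.to_nat (v m)). split.
        specialize (Hr m). apply Z2Nat.id; lia.
        apply in_seq. specialize (Hr m). split; [lia|]. 
        assert (Z.to_nat (v m) <= Z.to_nat b)%nat by (apply Z2Nat.inj_le; lia). lia.
Qed.

Lemma exists_filter (F : list vec) (P : vec -> Prop) : exists H, forall h, In h H <-> In h F /\ P h.
Proof.
  induction F as [|a F [H IH]].
  - exists []. simpl. tauto.
  - destruct (classic (P a)).
    + exists (a :: H). intros h. simpl. rewrite IH. split; [intros [<-|[? ?]]; auto|].
      intros [[<-|?] ?]; auto.
    + exists H. intros h. simpl. rewrite IH. split; [intros [? ?]; auto|].
      intros [[<-|?] ?]; auto. contradiction.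
Qed.

Lemma compress b : 0 <= b -> forall n v, bounded v n -> nonneg v -> vsum n v = b ->
  exists s, bounded (act s v) (Z.to_nat b).
Proof.
  intros Hb0. set (K := Z.to_nat b). assert (HbK : b = Z.of_nat K) by (unfold K; lia). clearbody K.
  induction n as [|m IH]; intros v Hb Hnn Hs.
  - exists (swap 0 0). intros i Hi. unfold act. cbn. unfold swapf. apply Hb. lia.
  - destruct (le_lt_dec (S m) K).
    + exists (swap 0 0). intros i Hi. unfold act. cbn. unfold swapf.
      destruct (Nat.eqb_spec i 0); subst; apply Hb; lia.
    + destruct (Z.eq_dec (v m) 0) as [Hvm|Hvm].
      * apply IH; auto. intros x Hx. destruct (Nat.eq_dec x m); subst; auto. apply Hb; lia.
        simpl in Hs. lia.
      * destruct (classic (exists j, (j < K)%nat /\ v j = 0)) as [[j [Hj Hvj]]|Hno].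
        -- set (w := act (swap j m) v).
           assert (Hwb : bounded w m).
           { intros i Hi. unfold w, act. cbn. unfold swapf.
             destruct (Nat.eqb_spec i j); [lia|]. destruct (Nat.eqb_spec i m); auto. apply Hb; lia. }
           destruct (IH w) as [s Hsb]; auto.
           ++ intros i. unfold w, act. apply Hnn.
           ++ assert (vsum (S m) w = b).
              { unfold w, act. rewrite perm_sum with (N := S m); auto.
                intros i Hi. cbn. unfold swapf. destruct (Nat.eqb_spec i j); [lia|].
                destruct (Nat.eqb_spec i m); [lia|auto]. }
              simpl in H. rewrite (Hwb m) in H by lia. lia.
           ++ exists (pcomp s (swap j m)). rewrite <- act_comp. exact Hsb.
        -- exfalso. assert (Hc : Z.of_nat K <= vsum K v).
           { apply vsum_count. intros j Hj. specialize (Hnn j).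
             destruct (Z.eq_dec (v j) 0); [|lia]. exfalso; apply Hno; eauto. }
           pose proof (vsum_mono v K m Hnn ltac:(lia)). simpl in Hs. specialize (Hnn m). lia.
Qed.

Lemma Fc_nonneg (cs : list (nat * vec)) : Forall (fun p => nonneg (snd p)) cs ->
  forall i, 0 <= fold_right (fun p acc => Z.of_nat (fst p) * snd p i + acc) 0 cs.
Proof.
  induction 1 as [|[c h] cs Hh Hcs IH]; intros i; simpl; try lia. specialize (IH i). specialize (Hh i). simpl in Hh.
  pose proof (Nat2Z.is_nonneg c). nia.
Qed.

Lemma Fc_pick (cs : list (nat * vec)) : Forall (fun p => nonneg (snd p)) cs -> forall v : vec,
  (forall i, v i = fold_right (fun p acc => Z.of_nat (fst p) * snd p i + acc) 0 cs) ->
  (exists i, v i <> 0) -> exists p, In p cs /\ forall i, snd p i <= v i.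
Proof.
  induction 1 as [|[c h] cs Hh Hcs IH]; intros v Hv [i0 Hi0]; simpl in *.
  - specialize (Hv i0). lia.
  - destruct c as [|c].
    + destruct (IH v) as [p [Hp Hp2]].
      * intros i. rewrite Hv. simpl. lia.
      * eauto.
      * eauto.
    + exists (S c, h). split; auto. intros i. simpl. rewrite Hv. pose proof (Fc_nonneg cs Hcs i).
      specialize (Hh i). simpl in Hh. nia.
Qed.

Lemma nncomb_mono (B1 B2 : vec -> Prop) v : (forall x, B1 x -> B2 x) -> nncomb B1 v -> nncomb B2 v.
Proof. intros H [cs [Hcs Hv]]. exists cs. split; auto. eapply Forall_impl; [|exact Hcs]. intros; auto. Qed.

Theorem lemma4p8 :
  forall L : vec -> Prop,
    is_lattice L -> sym_invariant L ->
    exists H : list vec, equivariant_hilbert_basis H (nonneg_part L).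
Proof.
  intros L HL HS. pose proof HL as (Hf & H0 & Ha & Ho).
  assert (Hsum0 : forall v, nonneg_part L v -> exists n, bounded v n /\ 0 <= vsum n v).
  { intros v [Lv Hnn]. destruct (Hf v Lv) as [n Hn]. exists n. split; auto. apply vsum_nonneg; auto. }
  destruct (classic (exists v s, nonneg_part L v /\ hassum v s /\ s > 0)) as [Hpos|Hzero].
  2:{
    exists []. split; [intros h []|]. split; [split|].
    - intros v [s [h [[] _]]].
    - intros v Hv. destruct (Hsum0 v Hv) as [n [Hn Hs]].
      assert (vsum n v = 0).
      { destruct (Z.eq_dec (vsum n v) 0); auto. exfalso. apply Hzero. exists v, (vsum n v).
        split; auto. split; [exists n; auto|lia]. }
      exists []. split; auto. intros i. simpl.
      destruct (le_lt_dec n i); auto. eapply vsum_zero_inv; eauto. apply (proj2 Hv).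
    - intros B' _ _ v [s [h [[] _]]]. }
  set (P := fun k => (0 < k)%nat /\ exists v, nonneg_part L v /\ hassum v (Z.of_nat k)).
  destruct (dec_inh_nat_subset_has_unique_least_element P (fun k => classic (P k))) as [K [[HPK Hleast] _]].
  { destruct Hpos as [v [s [Hv [Hs Hs0]]]]. exists (Z.to_nat s). split; [lia|].
    exists v. split; auto. rewrite Z2Nat.id; [auto|lia]. }
  destruct HPK as [HK0 [u0 [Mu0 Hu0]]].
  remember (Z.of_nat K) as b eqn:Hbdef.
  assert (Hmin : forall v s, nonneg_part L v -> hassum v s -> s > 0 -> b <= s).
  { intros v s Hv Hs Hs0. assert (K <= Z.to_nat s)%nat.
    { apply Hleast. split; [lia|]. exists v. split; auto. rewrite Z2Nat.id; [auto|lia]. }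
    lia. }
  set (G := fun v => nonneg_part L v /\ hassum v b).
  assert (Hgen : forall S v, nonneg_part L v -> hassum v (Z.of_nat S) -> nncomb G v).
  { intros S. induction S as [S IH] using (well_founded_induction lt_wf).
    intros v [Lv Hnn] [n [Hn Hs]].
    destruct (Nat.eq_dec S 0) as [->|HS0].
    - exists []. split; auto. intros i. simpl.
      destruct (le_lt_dec n i); auto. eapply vsum_zero_inv; eauto.
    - assert (Hbs : b <= Z.of_nat S).
      { apply (Hmin v); [split; auto| exists n; auto| lia]. }
      destruct Mu0 as [Lu Hnu]. destruct Hu0 as [n' [Hn' Hs']].
      set (N := (n + n')%nat).
      assert (HvN : vsum N v = Z.of_nat S) by (rewrite vsum_extend with (n := n); auto; unfold N; lia).
      assert (HuN : vsum N u0 = b) by (rewrite vsum_extend with (n := n'); auto; unfold N; lia).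
      assert (HIb : II L b) by (rewrite <- Hs'; apply II_vsum; auto; intros; apply K1; auto).
      destruct (greedy L N HL v b) as [w (Hwb & Hw1 & Hw2 & Hw3)]; auto.
      + intros i Hi. apply Hn. unfold N in Hi. lia.
      + intros m. apply K1; auto.
      + lia.
      + assert (Lw : L w).
        { eapply L_ext. apply Ha; [exact Lu| apply (K2 L N HL (fun x => w x - u0 x))].
          - intros i Hi. rewrite Hwb, Hn' by (unfold N in Hi; lia). lia.
          - intros m. apply II_sub; auto. apply K1; auto.
          - rewrite vsum_sub. lia.
          - intros i. unfold vadd. lia. }
        assert (Gw : G w).
        { split. split; auto. intros m; specialize (Hw1 m); lia. exists N; auto. }
        destruct (IH (S - Z.to_nat b)%nat ltac:(lia) (vadd v (vopp w))) as [cs [Hcs Hcomb]].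
        * split. apply Ha; auto. intros m. unfold vadd, vopp. specialize (Hw1 m). lia.
        * exists N. split.
          -- intros i Hi. unfold vadd, vopp. rewrite Hwb, Hn by (unfold N in Hi; lia). lia.
          -- assert (vsum N (vadd v (vopp w)) = vsum N v - vsum N w).
             { rewrite <- vsum_sub. apply vsum_ext. intros. unfold vadd, vopp. lia. }
             rewrite H, HvN, Hw3. lia.
        * exists ((1%nat, w) :: cs). split. constructor; auto.
          intros i. cbn [fold_right fst snd]. rewrite <- Hcomb. unfold vadd, vopp. lia. }
  assert (Hb0 : 0 <= b) by lia.
  assert (GM : forall v, G v -> nonneg_part L v) by (intros v [? ?]; auto).
  assert (Gact : forall s v, G v -> G (act s v)).
  { intros s v [[Lv Hnn] Hs]. split. split. apply HS; auto. intros i; apply Hnn. apply hassum_act; auto. }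
  destruct (exists_filter (Flist b K) (fun h => G h /\ bounded h K)) as [H HH].
  assert (OtoG : forall v, orbit H v -> G v).
  { intros v [s [h [Hh ->]]]. apply HH in Hh. apply Gact. apply Hh. }
  assert (GtoO : forall v, G v -> orbit H v).
  { intros v Gv. pose proof Gv as [[Lv Hnn] [n [Hn Hs]]].
    destruct (compress b Hb0 n v Hn Hnn Hs) as [s Hsb].
    rewrite Hbdef, Nat2Z.id in Hsb.
    exists (pinv s), (act s v). split; [|symmetry; apply act_inv].
    apply HH. split; [|split; auto].
    apply Flist_in; auto. intros m. split. apply Hnn.
    destruct (Gact s v Gv) as [[_ Hnn'] [n2 [Hn2 Hs2]]].
    destruct (le_lt_dec n2 m). rewrite Hn2; auto. rewrite <- Hs2. apply vsum_ge_entry; auto. }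
  exists H. split.
  { intros h Hh. apply HH in Hh. apply GM, Hh. }
  split; [split|].
  - intros v Hv. apply GM, OtoG, Hv.
  - intros v Hv. destruct (Hsum0 v Hv) as [n [Hn Hs]].
    apply (nncomb_mono G). intros; apply GtoO; auto.
    apply (Hgen (Z.to_nat (vsum n v))); auto. exists n. split; auto. lia.
  - intros B' HB' [Hg1 Hg2] v Hv.
    pose proof (OtoG v Hv) as Gv.
    destruct (Hg2 v (GM v Gv)) as [cs [Hcs Hcomb]].
    assert (HcsG : Forall (fun p => G (snd p)) cs).
    { eapply Forall_impl; [|exact Hcs]. intros p Hp. apply OtoG, HB', Hp. }
    destruct (Fc_pick cs) with (v := v) as [[c h] [Hp Hle]]; auto.
    + eapply Forall_impl; [|exact HcsG]. intros p [[_ Hp] _]. exact Hp.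
    + destruct Gv as [_ [n [Hn Hs]]]. apply NNPP. intros Hno.
      assert (vsum n v = 0). { apply vsum_zero. intros m _. apply NNPP. intros Hm. apply Hno. eauto. }
      lia.
    + simpl in Hle. rewrite Forall_forall in HcsG, Hcs.
      assert (Gh : G h) by (apply (HcsG _ Hp)).
      assert (v = h).
      { destruct Gv as [_ [n1 [Hn1 Hs1]]]. destruct Gh as [[_ Hnh] [n2 [Hn2 Hs2]]].
        apply functional_extensionality. intros m.
        destruct (le_lt_dec (n1 + n2) m).
        - rewrite Hn1, Hn2 by lia. auto.
        - assert (vsum (n1 + n2) (fun x => v x - h x) = 0).
          { rewrite vsum_sub, (vsum_extend v n1), (vsum_extend h n2); auto; lia. }
          pose proof (vsum_zero_inv (fun x => v x - h x) (n1 + n2)) as Z0.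
          assert (v m - h m = 0). { apply Z0; auto. intros x. specialize (Hle x). lia. }
          lia. }
      subst h. apply (Hcs _ Hp).
Qed.
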